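(* Let $\mathbf{V}$ be a variety of interior algebras and $B\in\mathbf{V}$. Then $\mathcal{O}(B)$ is projective in $\gamma(\mathbf{V})$ if and only if $B^*$ is projective in $\mathbf{V}^*$.
   Context: An interior algebra $\langle B,g\rangle$ is a Boolean algebra with an operator $g$ satisfying $g(1)=1$, $g(xy)=g(x)g(y)$, $g(x)\le x$, $gg(x)=g(x)$; $a$ is open if $g(a)=a$. $\mathcal{O}(B)=B^\circ$ is the Heyting algebra of open elements with $a\Rightarrow b=g(-a+b)$, and $\gamma(\mathbf{V})=\{\mathcal{O}(A):A\in\mathbf{V}\}$ (a variety of Heyting algebras). $B^*$ is the subalgebra generated by the open elements; $\mathbf{V}^*$ is the variety generated by the algebras $A\in\mathbf{V}$ with $A=A^*$. *)

(* Defs.v *)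
Set Implicit Arguments.

Record IAsig := {
  ia_car :> Type;
  ia_join : ia_car -> ia_car -> ia_car;
  ia_meet : ia_car -> ia_car -> ia_car;
  ia_compl : ia_car -> ia_car;
  ia_zero : ia_car;
  ia_one : ia_car;
  ia_int : ia_car -> ia_car
}.

Arguments ia_join {_}. Arguments ia_meet {_}. Arguments ia_compl {_}.
Arguments ia_zero {_}. Arguments ia_one {_}. Arguments ia_int {_}.

Record is_IA (A : IAsig) : Prop := {
  ia_join_comm : forall x y : A, ia_join x y = ia_join y x;
  ia_meet_comm : forall x y : A, ia_meet x y = ia_meet y x;
  ia_join_distr : forall x y z : A,
      ia_join x (ia_meet y z) = ia_meet (ia_join x y) (ia_join x z);
  ia_meet_distr : forall x y z : A,
      ia_meet x (ia_join y z) = ia_join (ia_meet x y) (ia_meet x z);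
  ia_join_zero : forall x : A, ia_join x ia_zero = x;
  ia_meet_one : forall x : A, ia_meet x ia_one = x;
  ia_join_compl : forall x : A, ia_join x (ia_compl x) = ia_one;
  ia_meet_compl : forall x : A, ia_meet x (ia_compl x) = ia_zero;
  ia_int_one : ia_int (ia_one : A) = ia_one;
  ia_int_meet : forall x y : A, ia_int (ia_meet x y) = ia_meet (ia_int x) (ia_int y);
  ia_int_le : forall x : A, ia_meet (ia_int x) x = ia_int x;
  ia_int_idem : forall x : A, ia_int (ia_int x) = ia_int x
}.

Definition is_hom_IA {A B : IAsig} (f : A -> B) : Prop :=
  (forall x y, f (ia_join x y) = ia_join (f x) (f y)) /\
  (forall x y, f (ia_meet x y) = ia_meet (f x) (f y)) /\
  (forall x, f (ia_compl x) = ia_compl (f x)) /\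
  f ia_zero = ia_zero /\ f ia_one = ia_one /\
  (forall x, f (ia_int x) = ia_int (f x)).

Definition injective {X Y : Type} (f : X -> Y) : Prop :=
  forall x y, f x = f y -> x = y.
Definition surjective {X Y : Type} (f : X -> Y) : Prop :=
  forall y, exists x, f x = y.

Definition IAprod (I : Type) (A : I -> IAsig) : IAsig := {|
  ia_car := forall i, A i;
  ia_join := fun x y i => ia_join (x i) (y i);
  ia_meet := fun x y i => ia_meet (x i) (y i);
  ia_compl := fun x i => ia_compl (x i);
  ia_zero := fun i => ia_zero;
  ia_one := fun i => ia_one;
  ia_int := fun x i => ia_int (x i) |}.

(* A variety of interior algebras: a class of interior algebras closed under
   homomorphic images (H), subalgebras (S, i.e. domains of embeddings) and
   direct products (P). *)
Definition IA_variety (V : IAsig -> Prop) : Prop :=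
  (forall A, V A -> is_IA A) /\
  (forall (A C : IAsig) (f : A -> C), V A -> is_hom_IA f -> surjective f -> V C) /\
  (forall (A C : IAsig) (f : C -> A), V A -> is_hom_IA f -> injective f -> V C) /\
  (forall (I : Type) (A : I -> IAsig), (forall i, V (A i)) -> V (IAprod A)).

Definition IA_gen_variety (K : IAsig -> Prop) : IAsig -> Prop :=
  fun A => forall W, IA_variety W -> (forall C, K C -> W C) -> W A.

Definition projective_IA (K : IAsig -> Prop) (P : IAsig) : Prop :=
  K P /\
  forall (C D : IAsig), K C -> K D ->
  forall f : C -> D, is_hom_IA f -> surjective f ->
  forall h : P -> D, is_hom_IA h ->
  exists k : P -> C, is_hom_IA k /\ forall x, f (k x) = h x.

Inductive gen_open (A : IAsig) : A -> Prop :=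
| go_open : forall x, ia_int x = x -> gen_open A x
| go_join : forall x y, gen_open A x -> gen_open A y -> gen_open A (ia_join x y)
| go_meet : forall x y, gen_open A x -> gen_open A y -> gen_open A (ia_meet x y)
| go_compl : forall x, gen_open A x -> gen_open A (ia_compl x)
| go_zero : gen_open A ia_zero
| go_one : gen_open A ia_one
| go_int : forall x, gen_open A x -> gen_open A (ia_int x).

Definition Bstar (A : IAsig) : IAsig := {|
  ia_car := { x : A | gen_open A x };
  ia_join := fun x y => exist _ _ (go_join (proj2_sig x) (proj2_sig y));
  ia_meet := fun x y => exist _ _ (go_meet (proj2_sig x) (proj2_sig y));
  ia_compl := fun x => exist _ _ (go_compl (proj2_sig x));
  ia_zero := exist _ _ (go_zero A);
  ia_one := exist _ _ (go_one A);
  ia_int := fun x => exist _ _ (go_int (proj2_sig x)) |}.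

(* A = A^* : A is generated by its open elements *)
Definition is_star (A : IAsig) : Prop := forall x : A, gen_open A x.

Definition star_variety (V : IAsig -> Prop) : IAsig -> Prop :=
  IA_gen_variety (fun A => V A /\ is_star A).

Record HAsig := {
  ha_car :> Type;
  ha_meet : ha_car -> ha_car -> ha_car;
  ha_join : ha_car -> ha_car -> ha_car;
  ha_imp : ha_car -> ha_car -> ha_car;
  ha_bot : ha_car;
  ha_top : ha_car
}.

Arguments ha_meet {_}. Arguments ha_join {_}. Arguments ha_imp {_}.
Arguments ha_bot {_}. Arguments ha_top {_}.

Definition is_hom_HA {H K : HAsig} (f : H -> K) : Prop :=
  (forall x y, f (ha_meet x y) = ha_meet (f x) (f y)) /\
  (forall x y, f (ha_join x y) = ha_join (f x) (f y)) /\
  (forall x y, f (ha_imp x y) = ha_imp (f x) (f y)) /\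
  f ha_bot = ha_bot /\ f ha_top = ha_top.

Definition iso_HA (H K : HAsig) : Prop :=
  exists f : H -> K, is_hom_HA f /\ injective f /\ surjective f.

Definition projective_HA (K : HAsig -> Prop) (P : HAsig) : Prop :=
  K P /\
  forall (C D : HAsig), K C -> K D ->
  forall f : C -> D, is_hom_HA f -> surjective f ->
  forall h : P -> D, is_hom_HA h ->
  exists k : P -> C, is_hom_HA k /\ forall x, f (k x) = h x.

(* Join and bottom are written g(a + b) and g 0: in an interior algebra
   these equal a + b and 0 for open a, b, and writing them this way makes
   openness immediate from g g = g. *)
Section Opens.
Variables (A : IAsig) (HA : is_IA A).

Definition open_el := { x : A | ia_int x = x }.

Definition op_int (x : A) : open_el := exist _ (ia_int x) (ia_int_idem HA x).

Lemma op_meet_proof (a b : open_el) :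
  ia_int (ia_meet (proj1_sig a) (proj1_sig b)) = ia_meet (proj1_sig a) (proj1_sig b).
Proof.
  rewrite (ia_int_meet HA). now rewrite (proj2_sig a), (proj2_sig b).
Qed.

Definition Opens : HAsig := {|
  ha_car := open_el;
  ha_meet := fun a b => exist _ _ (op_meet_proof a b);
  ha_join := fun a b => op_int (ia_join (proj1_sig a) (proj1_sig b));
  ha_imp := fun a b => op_int (ia_join (ia_compl (proj1_sig a)) (proj1_sig b));
  ha_bot := op_int ia_zero;
  ha_top := exist _ ia_one (ia_int_one HA) |}.
End Opens.

Definition gamma (V : IAsig -> Prop) : HAsig -> Prop :=
  fun H => exists (A : IAsig) (HA : is_IA A), V A /\ iso_HA H (Opens HA).

(* Main.v *)
Require Import Defs.
From Stdlib Require Import List ProofIrrelevance ClassicalEpsilon.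
Import ListNotations.

Declare Scope ia_scope.
Delimit Scope ia_scope with ia.
Notation "x + y" := (ia_join x y) : ia_scope.
Notation "x * y" := (ia_meet x y) : ia_scope.
Notation "- x" := (ia_compl x) : ia_scope.
Open Scope ia_scope.

Section BA.
Context {A : IAsig} (HA : is_IA A).
Notation jC := (ia_join_comm HA).
Notation mC := (ia_meet_comm HA).
Notation jD := (ia_join_distr HA).
Notation mD := (ia_meet_distr HA).
Notation j0 := (ia_join_zero HA).
Notation m1 := (ia_meet_one HA).
Notation jc := (ia_join_compl HA).
Notation mc := (ia_meet_compl HA).

Lemma jidem (x : A) : x + x = x.
Proof. rewrite <- (m1 (x+x)), <- (jc x), <- jD, mc, j0. reflexivity. Qed.
Lemma midem (x : A) : x * x = x.
Proof. rewrite <- (j0 (x*x)), <- (mc x), <- mD, jc, m1. reflexivity. Qed.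
Lemma m1l (x : A) : ia_one * x = x.
Proof. rewrite mC; apply m1. Qed.
Lemma j0l (x : A) : ia_zero + x = x.
Proof. rewrite jC; apply j0. Qed.
Lemma j1 (x : A) : x + ia_one = ia_one.
Proof. rewrite <- (m1 (x + ia_one)). rewrite <- (jc x) at 2. rewrite <- jD, m1l. apply jc. Qed.
Lemma m0 (x : A) : x * ia_zero = ia_zero.
Proof. rewrite <- (j0 (x * ia_zero)). rewrite <- (mc x) at 2. rewrite <- mD, j0l. apply mc. Qed.
Lemma j1l (x : A) : ia_one + x = ia_one.
Proof. rewrite jC; apply j1. Qed.
Lemma m0l (x : A) : ia_zero * x = ia_zero.
Proof. rewrite mC; apply m0. Qed.
Lemma jabs (x y : A) : x + x * y = x.
Proof. rewrite <- (m1 x) at 1. rewrite <- mD, j1l. apply m1. Qed.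
Lemma mabs (x y : A) : x * (x + y) = x.
Proof. rewrite <- (j0 x) at 1. rewrite <- jD, m0l. apply j0. Qed.
Lemma cancel (a x y : A) : a * x = a * y -> - a * x = - a * y -> x = y.
Proof.
  intros H1 H2. rewrite <- (m1 x), <- (m1 y), <- (jc a), !mD.
  rewrite (mC x a), (mC y a), (mC x (-a)), (mC y (-a)), H1, H2. reflexivity.
Qed.
Lemma jA (x y z : A) : x + (y + z) = (x + y) + z.
Proof.
  apply (cancel x).
  - rewrite mD, midem, jabs, mD, mabs, jabs. reflexivity.
  - rewrite !mD. rewrite (mC (-x) x), mc, j0l, j0l. reflexivity.
Qed.
Lemma cancel2 (a x y : A) : a + x = a + y -> - a + x = - a + y -> x = y.
Proof.
  intros H1 H2. rewrite <- (j0 x), <- (j0 y), <- (mc a), !jD.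
  rewrite (jC x a), (jC y a), (jC x (-a)), (jC y (-a)), H1, H2. reflexivity.
Qed.
Lemma mA (x y z : A) : x * (y * z) = (x * y) * z.
Proof.
  apply (cancel2 x).
  - rewrite jabs, jD, jabs, mabs. reflexivity.
  - rewrite !jD. rewrite (jC (-x) x), jc, !m1l. reflexivity.
Qed.
Lemma compl_uniq (x y : A) : x + y = ia_one -> x * y = ia_zero -> y = - x.
Proof.
  intros H1 H2. rewrite <- (m1 y), <- (jc x), mD, (mC y x), H2, j0l.
  rewrite <- (m1 (-x)) at 2. rewrite <- H1, mD, (mC (-x) x), mc, j0l, mC. reflexivity.
Qed.
Lemma ccK (x : A) : - - x = x.
Proof. symmetry. apply compl_uniq. rewrite jC; apply jc. rewrite mC; apply mc. Qed.
Lemma cj (x y : A) : - (x + y) = - x * - y.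
Proof.
  symmetry. apply compl_uniq.
  - rewrite jD, (jC x y), <- jA, jc, j1, (jC y x), <- jA, jc, j1, m1. reflexivity.
  - rewrite mC, mD, <- mA, (mC (-y) x), mA, (mC (-x) x), mc, m0l, <- mA, (mC (-y) y), mc, m0, j0.
    reflexivity.
Qed.
Lemma cm (x y : A) : - (x * y) = - x + - y.
Proof. rewrite <- (ccK x) at 1. rewrite <- (ccK y) at 1. rewrite <- cj. apply ccK. Qed.
Lemma c1 : - (ia_one : A) = ia_zero.
Proof. rewrite <- (m1l (-ia_one)). apply mc. Qed.
Lemma c0 : - (ia_zero : A) = ia_one.
Proof. rewrite <- (j0l (-ia_zero)). apply jc. Qed.
Lemma le_one_iff (x y : A) : - x + y = ia_one <-> x * y = x.
Proof.
  split; intro H.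
  - rewrite <- (m1 x) at 2. rewrite <- H, mD, mc, j0l. reflexivity.
  - assert (E : - x + y = - (x * y) + y) by (rewrite H; reflexivity).
    rewrite E, cm, <- jA, (jC (-y) y), jc, j1. reflexivity.
Qed.
Lemma meet_one_inv (x y : A) : x * y = ia_one -> x = ia_one.
Proof. intro H. rewrite <- (m1 x), <- H, mA, midem. reflexivity. Qed.
Lemma le_antisym (x y : A) : x * y = x -> y * x = y -> x = y.
Proof. intros H1 H2. transitivity (x * y). symmetry; exact H1. rewrite mC; exact H2. Qed.

Lemma g_mono (x y : A) : x * y = x -> ia_int x * ia_int y = ia_int x.
Proof. intro H. rewrite <- (ia_int_meet HA), H. reflexivity. Qed.
Lemma g0 : ia_int (ia_zero : A) = ia_zero.
Proof. rewrite <- (ia_int_le HA). apply m0. Qed.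
Lemma g_open_meet (a b : A) : ia_int a = a -> ia_int b = b -> ia_int (a * b) = a * b.
Proof. intros Ha Hb. rewrite (ia_int_meet HA), Ha, Hb. reflexivity. Qed.
Lemma g_open_join (a b : A) : ia_int a = a -> ia_int b = b -> ia_int (a + b) = a + b.
Proof.
  intros Ha Hb.
  assert (Ea : a * ia_int (a + b) = a).
  { rewrite <- Ha at 1 3. apply g_mono. apply mabs. }
  assert (Eb : b * ia_int (a + b) = b).
  { rewrite <- Hb at 1 3. apply g_mono. rewrite jC. apply mabs. }
  rewrite <- (ia_int_le HA), mD, (mC _ a), (mC _ b), Ea, Eb. reflexivity.
Qed.
End BA.


Inductive bt (T : Type) : Type :=
| bl (a : T) | bj (s t : bt T) | bm (s t : bt T) | bc (s : bt T) | b0 | b1.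
Arguments bl {T}. Arguments bj {T}. Arguments bm {T}. Arguments bc {T}.
Arguments b0 {T}. Arguments b1 {T}.

Fixpoint ev {T : Type} {X : IAsig} (psi : T -> X) (t : bt T) : X :=
  match t with
  | bl a => psi a
  | bj s u => ev psi s + ev psi u
  | bm s u => ev psi s * ev psi u
  | bc s => - ev psi s
  | b0 => ia_zero
  | b1 => ia_one
  end.

Lemma jswap {X : IAsig} (HX : is_IA X) (w x y z : X) : (w + x) + (y + z) = (w + y) + (x + z).
Proof.
  rewrite <- !(jA HX). f_equal. rewrite !(jA HX). f_equal. apply (ia_join_comm HX).
Qed.
Lemma jDr {X : IAsig} (HX : is_IA X) (x y z : X) : (x * y) + z = (x + z) * (y + z).
Proof. rewrite (ia_join_comm HX), (ia_join_distr HX), !(ia_join_comm HX z). reflexivity. Qed.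

Section NF.
Context {A : IAsig} (HA : is_IA A).
Definition op (a : A) : Prop := ia_int a = a.
Fixpoint lo (t : bt A) : Prop :=
  match t with
  | bl a => op a
  | bj s u => lo s /\ lo u
  | bm s u => lo s /\ lo u
  | bc s => lo s
  | b0 => True
  | b1 => True
  end.
Definition cnf {X : IAsig} (psi : A -> X) (L : list (A * A)) : X :=
  fold_right (fun p acc => (- psi (fst p) + psi (snd p)) * acc) ia_one L.
Definition prodc (L1 L2 : list (A * A)) : list (A * A) :=
  flat_map (fun p => map (fun q => (fst p * fst q, snd p + snd q)) L2) L1.
Definition complc (L : list (A * A)) : list (A * A) :=
  fold_right (fun p acc => prodc [(ia_one, fst p); (snd p, ia_zero)] acc) [(ia_one, ia_zero)] L.
Definition AllOpen (L : list (A * A)) : Prop := forall p, In p L -> op (fst p) /\ op (snd p).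
Definition LH {X : IAsig} (psi : A -> X) : Prop :=
  psi ia_zero = ia_zero /\ psi ia_one = ia_one /\
  forall a b, op a -> op b -> psi (a * b) = psi a * psi b /\ psi (a + b) = psi a + psi b.

Lemma op0 : op ia_zero. Proof. apply (g0 HA). Qed.
Lemma op1 : op ia_one. Proof. apply (ia_int_one HA). Qed.

Lemma complc_cons p L : complc (p :: L) = prodc [(ia_one, fst p); (snd p, ia_zero)] (complc L).
Proof. reflexivity. Qed.
Lemma AllOpen_prodc L1 L2 : AllOpen L1 -> AllOpen L2 -> AllOpen (prodc L1 L2).
Proof.
  intros H1 H2 p Hp. unfold prodc in Hp. apply in_flat_map in Hp as [p1 [Hp1 Hp]].
  apply in_map_iff in Hp as [p2 [<- Hp2]]. simpl.
  destruct (H1 p1 Hp1), (H2 p2 Hp2).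
  split; [apply (g_open_meet HA) | apply (g_open_join HA)]; assumption.
Qed.
Lemma AllOpen_complc L : AllOpen L -> AllOpen (complc L).
Proof.
  induction L as [|p L IH]; intro H; unfold complc; cbn [fold_right].
  - intros q [<-|[]]. split; [apply op1|apply op0].
  - apply AllOpen_prodc.
    + destruct (H p (or_introl eq_refl)).
      intros q [<-|[<-|[]]]; simpl; split; auto using op0, op1.
    + apply IH. intros q Hq. apply H. right; exact Hq.
Qed.

Section Gen.
Context {X : IAsig} (HX : is_IA X) (psi : A -> X) (Hpsi : LH psi).

Lemma cnf_app L1 L2 : cnf psi (L1 ++ L2) = cnf psi L1 * cnf psi L2.
Proof.
  induction L1 as [|p L1 IH]; simpl.
  - rewrite (m1l HX). reflexivity.
  - rewrite IH, (mA HX). reflexivity.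
Qed.

Lemma cnf_join1 (p : A * A) L2 : op (fst p) -> op (snd p) -> AllOpen L2 ->
  (- psi (fst p) + psi (snd p)) + cnf psi L2 =
  cnf psi (map (fun q => (fst p * fst q, snd p + snd q)) L2).
Proof.
  destruct Hpsi as [_ [_ Hm]].
  intros Hd Hc. induction L2 as [|q L2 IH]; intro HL; simpl.
  - apply (j1 HX).
  - rewrite (ia_join_distr HX), IH.
    2:{ intros r Hr. apply HL. right; exact Hr. }
    destruct (HL q (or_introl eq_refl)) as [Hd' Hc'].
    destruct (Hm _ _ Hd Hd') as [E1 _]. destruct (Hm _ _ Hc Hc') as [_ E2].
    rewrite E1, E2, (cm HX), (jswap HX). reflexivity.
Qed.

Lemma cnf_prodc L1 L2 : AllOpen L1 -> AllOpen L2 ->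
  cnf psi L1 + cnf psi L2 = cnf psi (prodc L1 L2).
Proof.
  intros H1 H2. induction L1 as [|p L1 IH]; simpl.
  - apply (j1l HX).
  - unfold prodc in *. simpl. rewrite cnf_app, (jDr HX), IH.
    2:{ intros r Hr. apply H1. right; exact Hr. }
    destruct (H1 p (or_introl eq_refl)).
    rewrite cnf_join1; auto.
Qed.

Lemma cnf_complc L : AllOpen L -> cnf psi (complc L) = - cnf psi L.
Proof.
  destruct Hpsi as [E0 [E1 _]].
  induction L as [|p L IH]; intro H.
  1: unfold complc; cbn [fold_right].
  2: rewrite complc_cons.
  - unfold cnf; simpl. rewrite E0, E1, (c1 HX), (ia_join_zero HX), (ia_meet_one HX).
    reflexivity.
  - rewrite <- cnf_prodc.
    + rewrite IH. 2:{ intros r Hr. apply H. right; exact Hr. }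
      unfold cnf at 1; simpl. rewrite E0, E1, (c1 HX), (j0l HX), (ia_join_zero HX), (ia_meet_one HX).
      rewrite (cm HX), (cj HX), (ccK HX). reflexivity.
    + destruct (H p (or_introl eq_refl)).
      intros q [<-|[<-|[]]]; simpl; split; auto using op0, op1.
    + apply AllOpen_complc. intros r Hr. apply H. right; exact Hr.
Qed.
End Gen.

Lemma NF (t : bt A) : lo t -> exists L, AllOpen L /\
  forall (X : IAsig) (HX : is_IA X) (psi : A -> X), LH psi -> ev psi t = cnf psi L.
Proof.
  induction t as [a|s IHs u IHu|s IHs u IHu|s IHs| |]; simpl; intro Hl.
  - exists [(ia_one, a)]. split.
    + intros q [<-|[]]. split; [apply op1|exact Hl].
    + intros X HX psi [E0 [E1 _]]. unfold cnf; simpl.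
      rewrite E1, (c1 HX), (j0l HX), (ia_meet_one HX). reflexivity.
  - destruct Hl as [Hs Hu]. destruct (IHs Hs) as [L1 [O1 E1]]. destruct (IHu Hu) as [L2 [O2 E2]].
    exists (prodc L1 L2). split. apply AllOpen_prodc; assumption.
    intros X HX psi Hpsi. rewrite E1, E2 by assumption. apply cnf_prodc; assumption.
  - destruct Hl as [Hs Hu]. destruct (IHs Hs) as [L1 [O1 E1]]. destruct (IHu Hu) as [L2 [O2 E2]].
    exists (L1 ++ L2). split.
    + intros p Hp. apply in_app_iff in Hp as [Hp|Hp]; auto.
    + intros X HX psi Hpsi. rewrite E1, E2 by assumption. symmetry. apply cnf_app; assumption.
  - destruct (IHs Hl) as [L1 [O1 E1]].
    exists (complc L1). split. apply AllOpen_complc; assumption.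
    intros X HX psi Hpsi. rewrite E1 by assumption. symmetry. apply cnf_complc; assumption.
  - exists [(ia_one, ia_zero)]. split.
    + intros q [<-|[]]. split; [apply op1|apply op0].
    + intros X HX psi [E0 [E1 _]]. unfold cnf; simpl.
      rewrite E0, E1, (c1 HX), (ia_join_zero HX), (ia_meet_one HX). reflexivity.
  - exists []. split. intros q []. intros; reflexivity.
Qed.
End NF.


Section Ext.
Context {A C : IAsig} (HA : is_IA A) (HC : is_IA C) (phi : A -> C)
  (Hphi : LH phi)
  (Hpo : forall x, ia_int (phi x) = phi x)
  (Hpi : forall a b, op a -> op b -> phi (ia_int (- a + b)) = ia_int (- phi a + phi b)).

Let idA := fun x : A => x.
Lemma LH_id : LH idA.
Proof. split; [reflexivity|split; [reflexivity|intros; split; reflexivity]]. Qed.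

Lemma cnf_one_A (L : list (A * A)) : cnf idA L = ia_one ->
  forall p, In p L -> - fst p + snd p = ia_one.
Proof.
  induction L as [|q L IH]; simpl; intros H p Hp; [destruct Hp|].
  destruct Hp as [<-|Hp].
  - exact (meet_one_inv HA _ _ H).
  - apply IH; auto. rewrite (ia_meet_comm HA) in H. exact (meet_one_inv HA _ _ H).
Qed.
Lemma cnf_one_C (L : list (A * A)) : (forall p, In p L -> - phi (fst p) + phi (snd p) = ia_one) ->
  cnf phi L = ia_one.
Proof.
  induction L as [|q L IH]; simpl; intros H; [reflexivity|].
  rewrite IH, H; auto. apply (ia_meet_one HC).
Qed.

Lemma transfer_le (t1 t2 : bt A) : lo t1 -> lo t2 ->
  ev idA t1 * ev idA t2 = ev idA t1 -> ev phi t1 * ev phi t2 = ev phi t1.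
Proof.
  intros H1 H2 Hle.
  destruct (NF HA (bj (bc t1) t2)) as [L [HO HE]]. simpl; auto.
  apply (le_one_iff HC).
  change (ev phi (bj (bc t1) t2) = ia_one).
  rewrite (HE C HC phi Hphi). apply cnf_one_C. intros p Hp.
  apply (le_one_iff HA) in Hle. change (ev idA (bj (bc t1) t2) = ia_one) in Hle.
  rewrite (HE A HA idA LH_id) in Hle.
  pose proof (cnf_one_A L Hle p Hp) as Hq. apply (le_one_iff HA) in Hq.
  apply (le_one_iff HC). destruct (HO p Hp) as [Od Oc].
  destruct Hphi as [_ [_ Hm]]. rewrite <- (proj1 (Hm _ _ Od Oc)), Hq. reflexivity.
Qed.

Lemma ev_eq (t1 t2 : bt A) : lo t1 -> lo t2 -> ev idA t1 = ev idA t2 -> ev phi t1 = ev phi t2.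
Proof.
  intros H1 H2 E. apply (le_antisym HC); apply transfer_le; auto.
  - rewrite E. apply (midem HA).
  - rewrite E. apply (midem HA).
Qed.

Definition gcnf {X : IAsig} (psi : A -> X) (L : list (A * A)) : X :=
  fold_right (fun p acc => ia_int (- psi (fst p) + psi (snd p)) * acc) ia_one L.
Lemma g_cnf {X : IAsig} (HX : is_IA X) (psi : A -> X) L : ia_int (cnf psi L) = gcnf psi L.
Proof.
  induction L as [|p L IH]; simpl. apply (ia_int_one HX).
  rewrite (ia_int_meet HX), IH. reflexivity.
Qed.
Lemma gcnf_open L : op (gcnf idA L).
Proof.
  induction L as [|p L IH]; simpl. apply (op1 HA).
  apply (g_open_meet HA); auto. apply (ia_int_idem HA).
Qed.
Lemma phi_gcnf L : AllOpen L -> phi (gcnf idA L) = gcnf phi L.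
Proof.
  induction L as [|p L IH]; simpl; intro H. apply Hphi.
  destruct (H p (or_introl eq_refl)) as [Od Oc].
  destruct Hphi as [_ [_ Hm]].
  rewrite (proj1 (Hm _ _ (ia_int_idem HA _) (gcnf_open L))).
  rewrite IH. 2:{ intros r Hr; apply H; right; exact Hr. }
  unfold idA. rewrite Hpi; auto.
Qed.
Lemma g_pres (t : bt A) : lo t -> phi (ia_int (ev idA t)) = ia_int (ev phi t).
Proof.
  intro Hl. destruct (NF HA t Hl) as [L [HO HE]].
  rewrite (HE A HA idA LH_id), (HE C HC phi Hphi), (g_cnf HA), (g_cnf HC).
  apply phi_gcnf; auto.
Qed.

Lemma rep (x : A) : gen_open A x -> exists t, lo t /\ ev idA t = x.
Proof.
  induction 1 as [x Hx|x y _ [s [Hs Es]] _ [u [Hu Eu]]|x y _ [s [Hs Es]] _ [u [Hu Eu]]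
                 |x _ [s [Hs Es]]| | |x _ _].
  - exists (bl x). simpl. split; [exact Hx|reflexivity].
  - exists (bj s u). simpl. subst. auto.
  - exists (bm s u). simpl. subst. auto.
  - exists (bc s). simpl. subst. auto.
  - exists b0. simpl. auto.
  - exists b1. simpl. auto.
  - exists (bl (ia_int x)). simpl. split; [apply (ia_int_idem HA)|reflexivity].
Qed.

Definition F (x : A) : C :=
  ev phi (epsilon (inhabits b0) (fun t => lo t /\ ev idA t = x)).

Lemma F_ev (t : bt A) : lo t -> F (ev idA t) = ev phi t.
Proof.
  intro Hl. unfold F.
  destruct (epsilon_spec (inhabits b0) (fun t' => lo t' /\ ev idA t' = ev idA t)) as [H1 H2].
  exists t; auto.
  apply ev_eq; auto.
Qed.

Lemma ev_gen (t : bt A) : gen_open C (ev phi t).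
Proof.
  induction t; simpl.
  - apply go_open. apply Hpo.
  - apply go_join; auto.
  - apply go_meet; auto.
  - apply go_compl; auto.
  - apply go_zero.
  - apply go_one.
Qed.

Lemma F_gen (x : A) : gen_open A x -> gen_open C (F x).
Proof. intro H. destruct (rep x H) as [t [Hl <-]]. rewrite F_ev by auto. apply ev_gen. Qed.

Lemma F_join x y : gen_open A x -> gen_open A y -> F (x + y) = F x + F y.
Proof.
  intros Hx Hy. destruct (rep x Hx) as [s [Hs <-]]. destruct (rep y Hy) as [u [Hu <-]].
  change (ev idA s + ev idA u) with (ev idA (bj s u)). rewrite !F_ev; simpl; auto.
Qed.
Lemma F_meet x y : gen_open A x -> gen_open A y -> F (x * y) = F x * F y.
Proof.
  intros Hx Hy. destruct (rep x Hx) as [s [Hs <-]]. destruct (rep y Hy) as [u [Hu <-]].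
  change (ev idA s * ev idA u) with (ev idA (bm s u)). rewrite !F_ev; simpl; auto.
Qed.
Lemma F_compl x : gen_open A x -> F (- x) = - F x.
Proof.
  intros Hx. destruct (rep x Hx) as [s [Hs <-]].
  change (- ev idA s) with (ev idA (bc s)). rewrite !F_ev; simpl; auto.
Qed.
Lemma F_zero : F ia_zero = ia_zero.
Proof. exact (F_ev b0 I). Qed.
Lemma F_one : F ia_one = ia_one.
Proof. exact (F_ev b1 I). Qed.
Lemma F_open a : op a -> F a = phi a.
Proof. intro H. exact (F_ev (bl a) H). Qed.
Lemma F_int x : gen_open A x -> F (ia_int x) = ia_int (F x).
Proof.
  intros Hx. rewrite F_open by apply (ia_int_idem HA).
  destruct (rep x Hx) as [s [Hs <-]]. rewrite F_ev by auto. apply g_pres; auto.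
Qed.
End Ext.


Lemma open_eq {A : IAsig} (a b : open_el A) : proj1_sig a = proj1_sig b -> a = b.
Proof. destruct a, b; simpl; intros ->. f_equal. apply proof_irrelevance. Qed.
Lemma bs_eq {A : IAsig} (a b : Bstar A) : proj1_sig a = proj1_sig b -> a = b.
Proof. destruct a, b; simpl; intros ->. f_equal. apply proof_irrelevance. Qed.

Definition bs {A : IAsig} (a : open_el A) : Bstar A :=
  exist _ (proj1_sig a) (go_open A (proj2_sig a)).

Definition mkO {A X : IAsig} (HA : is_IA A) (HX : is_IA X) (phi : open_el A -> X)
  (Ho : forall a, ia_int (phi a) = phi a) : Opens HA -> Opens HX :=
  fun a => exist _ (phi a) (Ho a).

Lemma mkO_hom {A X : IAsig} (HA : is_IA A) (HX : is_IA X) (phi : open_el A -> X)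
  (Ho : forall a, ia_int (phi a) = phi a)
  (Hm : forall a b : Opens HA, phi (ha_meet a b) = phi a * phi b)
  (Hj : forall a b : Opens HA, phi (ha_join a b) = ia_int (phi a + phi b))
  (Hi : forall a b : Opens HA, phi (ha_imp a b) = ia_int (- phi a + phi b))
  (H0 : phi (@ha_bot (Opens HA)) = ia_int ia_zero)
  (H1 : phi (@ha_top (Opens HA)) = ia_one) :
  is_hom_HA (mkO HA HX phi Ho).
Proof.
  unfold mkO. repeat split; intros; apply open_eq; simpl; [apply Hm|apply Hj|apply Hi|apply H0|apply H1].
Qed.

Lemma IAhom_O {C D : IAsig} (HC : is_IA C) (HD : is_IA D) (f : C -> D) (Hf : is_hom_IA f) :
  exists Of : Opens HC -> Opens HD, is_hom_HA Of /\ forall a, proj1_sig (Of a) = f (proj1_sig a).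
Proof.
  destruct Hf as [fj [fm [fc [f0 [f1 fg]]]]].
  assert (Ho : forall a : open_el C, ia_int (f (proj1_sig a)) = f (proj1_sig a)).
  { intros [a p]; simpl. rewrite <- fg, p. reflexivity. }
  exists (mkO HC HD _ Ho). split; [|reflexivity].
  apply mkO_hom; intros; simpl; rewrite ?fg, ?fj, ?fm, ?fc, ?f0, ?f1; reflexivity.
Qed.

Lemma bsO {B X : IAsig} (HB : is_IA B) (HX : is_IA X) (u : Bstar B -> X) (Hu : is_hom_IA u) :
  exists k : Opens HB -> Opens HX, is_hom_HA k /\ forall a, proj1_sig (k a) = u (bs a).
Proof.
  destruct Hu as [fj [fm [fc [f0 [f1 fg]]]]].
  assert (Ho : forall a : open_el B, ia_int (u (bs a)) = u (bs a)).
  { intros a. rewrite <- fg. f_equal. apply bs_eq. simpl. apply (proj2_sig a). }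
  exists (mkO HB HX _ Ho). split; [|reflexivity].
  apply mkO_hom; intros.
  - rewrite <- fm. f_equal. apply bs_eq. reflexivity.
  - rewrite <- fj, <- fg. f_equal. apply bs_eq. reflexivity.
  - rewrite <- fc, <- fj, <- fg. f_equal. apply bs_eq. reflexivity.
  - rewrite <- f0, <- fg. f_equal. apply bs_eq. reflexivity.
  - rewrite <- f1. f_equal. apply bs_eq. reflexivity.
Qed.

Lemma extend {A C : IAsig} (HA : is_IA A) (HC : is_IA C) (k0 : Opens HA -> Opens HC)
  (Hk : is_hom_HA k0) :
  exists Fs : Bstar A -> C, is_hom_IA Fs /\ (forall x, gen_open C (Fs x)) /\
    forall (x : Bstar A) (p : ia_int (proj1_sig x) = proj1_sig x),
      Fs x = proj1_sig (k0 (exist _ (proj1_sig x) p)).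
Proof.
  destruct Hk as [km [kj [ki [k0b k1]]]].
  set (phi := fun x : A => proj1_sig (k0 (op_int HA x))).
  assert (Eo : forall a (p : ia_int a = a), op_int HA a = exist _ a p).
  { intros a p. apply open_eq. exact p. }
  assert (Hpo : forall x, ia_int (phi x) = phi x).
  { intro x. unfold phi. apply (proj2_sig (k0 _)). }
  assert (Hphi : LH phi).
  { split; [|split].
    - unfold phi. change (op_int HA ia_zero) with (@ha_bot (Opens HA)). rewrite k0b. simpl. apply (g0 HC).
    - unfold phi. rewrite (Eo _ (ia_int_one HA)).
      change (exist _ ia_one (ia_int_one HA)) with (@ha_top (Opens HA)). rewrite k1. reflexivity.
    - intros a b Ha Hb. split.
      + unfold phi. replace (op_int HA (a * b)) with (@ha_meet (Opens HA) (op_int HA a) (op_int HA b)).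
        * rewrite km. reflexivity.
        * apply open_eq. simpl. symmetry. apply (ia_int_meet HA).
      + unfold phi. replace (op_int HA (a + b)) with (@ha_join (Opens HA) (op_int HA a) (op_int HA b)).
        * rewrite kj. simpl. apply (g_open_join HC); apply (proj2_sig (k0 _)).
        * apply open_eq. simpl. unfold op in Ha, Hb. rewrite Ha, Hb. reflexivity. }
  assert (Hpi : forall a b, op a -> op b -> phi (ia_int (- a + b)) = ia_int (- phi a + phi b)).
  { intros a b Ha Hb. unfold phi.
    replace (op_int HA (ia_int (- a + b))) with (@ha_imp (Opens HA) (op_int HA a) (op_int HA b)).
    - rewrite ki. reflexivity.
    - apply open_eq. simpl. unfold op in Ha, Hb. rewrite Ha, Hb, (ia_int_idem HA). reflexivity. }
  set (G := F phi).
  exists (fun x : Bstar A => G (proj1_sig x)). split; [|split].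
  - repeat split.
    + intros [x px] [y py]. eapply (F_join HA HC phi); eauto.
    + intros [x px] [y py]. eapply (F_meet HA HC phi); eauto.
    + intros [x px]. eapply (F_compl HA HC phi); eauto.
    + eapply (F_zero HA HC phi); eauto.
    + eapply (F_one HA HC phi); eauto.
    + intros [x px]. eapply (F_int HA HC phi); eauto.
  - intros [x px]. eapply (F_gen HA HC phi); eauto.
  - intros [x px] p. simpl. unfold G. rewrite (F_open HA HC phi Hphi) by exact p.
    unfold phi. simpl in p. rewrite (Eo _ p). reflexivity.
Qed.

Lemma to_star {A C : IAsig} (Fs : Bstar A -> C) (HF : is_hom_IA Fs)
  (Hg : forall x, gen_open C (Fs x)) :
  exists Gs : Bstar A -> Bstar C, is_hom_IA Gs /\ forall x, proj1_sig (Gs x) = Fs x.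
Proof.
  destruct HF as [fj [fm [fc [f0 [f1 fg]]]]].
  exists (fun x => exist _ (Fs x) (Hg x)). split; [|reflexivity].
  repeat split; intros; apply bs_eq; simpl; [apply fj|apply fm|apply fc|apply f0|apply f1|apply fg].
Qed.

Scheme gen_open_dind := Induction for gen_open Sort Prop.

Lemma uniq_star {A X : IAsig} (u v : Bstar A -> X) (Hu : is_hom_IA u) (Hv : is_hom_IA v)
  (Hopen : forall (a : A) (q : gen_open A a), ia_int a = a -> u (exist _ a q) = v (exist _ a q)) :
  forall x, u x = v x.
Proof.
  destruct Hu as [uj [um [uc [u0 [u1 ug]]]]]. destruct Hv as [vj [vm [vc [v0 [v1 vg]]]]].
  assert (K : forall (x : A) (q : gen_open A x), u (exist _ x q) = v (exist _ x q)).
  2:{ intros [x q]. apply K. }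
  intros x q. induction q as [x Hx | x y q1 IHq1 q2 IHq2 | x y q1 IHq1 q2 IHq2 | x q IHq | | | x q IHq] using gen_open_dind.
  - apply Hopen; auto.
  - change (exist _ (ia_join x y) (go_join q1 q2)) with
      (ia_join (exist _ x q1 : Bstar A) (exist _ y q2)).
    rewrite uj, vj, IHq1, IHq2. reflexivity.
  - change (exist _ (ia_meet x y) (go_meet q1 q2)) with
      (ia_meet (exist _ x q1 : Bstar A) (exist _ y q2)).
    rewrite um, vm, IHq1, IHq2. reflexivity.
  - change (exist _ (ia_compl x) (go_compl q)) with
      (ia_compl (exist _ x q : Bstar A)).
    rewrite uc, vc, IHq. reflexivity.
  - change (exist _ ia_zero (go_zero A)) with (ia_zero : Bstar A). rewrite u0, v0. reflexivity.
  - change (exist _ ia_one (go_one A)) with (ia_one : Bstar A). rewrite u1, v1. reflexivity.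
  - change (exist _ (ia_int x) (go_int q)) with
      (ia_int (exist _ x q : Bstar A)).
    rewrite ug, vg, IHq. reflexivity.
Qed.


Lemma HA_comp {H K L : HAsig} (f : H -> K) (g : K -> L) :
  is_hom_HA f -> is_hom_HA g -> is_hom_HA (fun x => g (f x)).
Proof.
  intros [fm [fj [fi [f0 f1]]]] [gm [gj [gi [g0' g1']]]].
  repeat split; intros; simpl; rewrite ?fm, ?fj, ?fi, ?f0, ?f1, ?gm, ?gj, ?gi, ?g0', ?g1'; reflexivity.
Qed.
Lemma IA_comp {A B C : IAsig} (f : A -> B) (g : B -> C) :
  is_hom_IA f -> is_hom_IA g -> is_hom_IA (fun x => g (f x)).
Proof.
  intros [fj [fm [fc [f0 [f1 fg]]]]] [gj [gm [gc [g0' [g1' gg]]]]].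
  repeat split; intros; simpl; rewrite ?fj, ?fm, ?fc, ?f0, ?f1, ?fg, ?gj, ?gm, ?gc, ?g0', ?g1', ?gg;
  reflexivity.
Qed.
Lemma iso_inv {H K : HAsig} (i : H -> K) : is_hom_HA i -> injective i -> surjective i ->
  exists j : K -> H, is_hom_HA j /\ (forall y, i (j y) = y) /\ (forall x, j (i x) = x).
Proof.
  intros Hi Hinj Hs.
  set (j := fun y => epsilon (inhabits (@ha_top H)) (fun x => i x = y)).
  assert (Hj : forall y, i (j y) = y).
  { intro y. unfold j. apply (epsilon_spec (inhabits (@ha_top H)) (fun x => i x = y)). apply Hs. }
  exists j. split; [|split; [exact Hj | intro x; apply Hinj; apply Hj]].
  destruct Hi as [im [ij [ii [i0 i1]]]].
  repeat split; intros; apply Hinj; rewrite ?im, ?ij, ?ii, ?i0, ?i1, !Hj; reflexivity.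
Qed.
Lemma iso_refl (H : HAsig) : iso_HA H H.
Proof.
  exists (fun x => x). split; [repeat split|split].
  - intros x y E; exact E.
  - intros y; exists y; reflexivity.
Qed.
Lemma proj1_hom (A : IAsig) : is_hom_IA (fun x : Bstar A => proj1_sig x).
Proof. repeat split. Qed.
Lemma Bstar_V (V : IAsig -> Prop) (HV : IA_variety V) (A : IAsig) : V A -> V (Bstar A).
Proof.
  intro HAV. destruct HV as [_ [_ [HS _]]].
  apply (HS A (Bstar A) (fun x => proj1_sig x) HAV (proj1_hom A)).
  intros x y E. apply bs_eq. exact E.
Qed.
Lemma Bstar_star (A : IAsig) : is_star (Bstar A).
Proof.
  intros [x q].
  induction q as [x Hx | x y q1 IHq1 q2 IHq2 | x y q1 IHq1 q2 IHq2 | x q IHq | | | x q IHq]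
    using gen_open_dind.
  - apply go_open. apply bs_eq. exact Hx.
  - exact (go_join IHq1 IHq2).
  - exact (go_meet IHq1 IHq2).
  - exact (go_compl IHq).
  - exact (go_zero _).
  - exact (go_one _).
  - exact (go_int IHq).
Qed.
Lemma Vstar_V (V : IAsig -> Prop) (HV : IA_variety V) A : star_variety V A -> V A.
Proof. intro H. apply (H V HV). intros C HC; apply HC. Qed.
Lemma Bstar_Vstar (V : IAsig -> Prop) (HV : IA_variety V) A : V A -> star_variety V (Bstar A).
Proof.
  intros HAV W HW Hgen. apply Hgen. split. apply Bstar_V; auto. apply Bstar_star.
Qed.

Theorem lemma5p9 (V : IAsig -> Prop) (HV : IA_variety V)
  (B : IAsig) (HBV : V B) (HB : is_IA B) :
  projective_HA (gamma V) (Opens HB) <-> projective_IA (star_variety V) (Bstar B).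
Proof.
  pose proof (proj1 HV) as HVIA.
  split.
  - intros [_ Hproj]. split. apply Bstar_Vstar; auto.
    intros C D HCs HDs f Hf Hsurj h Hh.
    pose proof (Vstar_V V HV C HCs) as HCV. pose proof (Vstar_V V HV D HDs) as HDV.
    pose proof (HVIA C HCV) as HC. pose proof (HVIA D HDV) as HD.
    destruct (IAhom_O HC HD f Hf) as [Of [HOf EOf]].
    assert (Osurj : surjective Of).
    { intros [y py]. destruct (Hsurj y) as [c Hc]. exists (op_int HC c).
      apply open_eq. rewrite EOf. simpl. destruct Hf as [_ [_ [_ [_ [_ fg]]]]].
      rewrite fg, Hc. exact py. }
    destruct (bsO HB HD h Hh) as [hb [Hhb Ehb]].
    destruct (Hproj (Opens HC) (Opens HD)) with (f := Of) (h := hb) as [k0 [Hk0 Ek0]];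
      auto.
    { exists C, HC. split; auto. apply iso_refl. }
    { exists D, HD. split; auto. apply iso_refl. }
    destruct (extend HB HC k0 Hk0) as [Fs [HFs [_ EFs]]].
    exists Fs. split; auto.
    apply uniq_star; auto. apply IA_comp; auto.
    intros a q p.
    rewrite (EFs (exist _ a q) p). simpl.
    rewrite <- EOf, Ek0, Ehb. f_equal. apply bs_eq. reflexivity.
  - intros [HBs Hproj]. split.
    { exists B, HB. split; auto. apply iso_refl. }
    intros C D [A1 [HA1 [HA1V Hi1]]] [A2 [HA2 [HA2V Hi2]]] f Hf Hsurj h Hh.
    destruct Hi1 as [i1 [Hi1 [inj1 surj1]]]. destruct Hi2 as [i2 [Hi2 [inj2 surj2]]].
    destruct (iso_inv i1 Hi1 inj1 surj1) as [j1 [Hj1 [E1a E1b]]].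
    destruct (iso_inv i2 Hi2 inj2 surj2) as [j2 [Hj2 [E2a E2b]]].
    set (f' := fun o => i2 (f (j1 o))).
    assert (Hf' : is_hom_HA f').
    { unfold f'. apply (HA_comp (fun o => f (j1 o)) i2); auto. apply HA_comp; auto. }
    assert (Sf' : surjective f').
    { intro y. destruct (Hsurj (j2 y)) as [c Hc]. exists (i1 c). unfold f'.
      rewrite E1b, Hc, E2a. reflexivity. }
    set (h' := fun o => i2 (h o)).
    assert (Hh' : is_hom_HA h') by (unfold h'; apply (HA_comp h i2); auto).
    destruct (extend HA1 HA2 f' Hf') as [Fs1 [HFs1 [GFs1 EFs1]]].
    destruct (to_star Fs1 HFs1 GFs1) as [Gs [HGs EGs]].
    destruct (extend HB HA2 h' Hh') as [Hs1 [HHs1 [GHs1 EHs1]]].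
    destruct (to_star Hs1 HHs1 GHs1) as [Hs [HHs EHs]].
    assert (Gsurj : surjective Gs).
    { intros [y q].
      induction q as [y Hy | x y q1 IHq1 q2 IHq2 | x y q1 IHq1 q2 IHq2 | x q IHq | | | x q IHq]
        using gen_open_dind.
      - destruct (Sf' (exist _ y Hy)) as [o Ho].
        exists (bs o). apply bs_eq. rewrite EGs. simpl.
        rewrite (EFs1 (bs o) (proj2_sig o)). simpl.
        replace (exist _ (proj1_sig o) (proj2_sig o)) with o by (destruct o; reflexivity).
        rewrite Ho. reflexivity.
      - destruct IHq1 as [x1 E1], IHq2 as [x2 E2]. exists (ia_join x1 x2).
        destruct HGs as [gj _]. rewrite gj, E1, E2. reflexivity.
      - destruct IHq1 as [x1 E1], IHq2 as [x2 E2]. exists (ia_meet x1 x2).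
        destruct HGs as [_ [gm _]]. rewrite gm, E1, E2. reflexivity.
      - destruct IHq as [x1 E1]. exists (ia_compl x1).
        destruct HGs as [_ [_ [gc _]]]. rewrite gc, E1. reflexivity.
      - exists ia_zero. destruct HGs as [_ [_ [_ [g0' _]]]]. rewrite g0'. reflexivity.
      - exists ia_one. destruct HGs as [_ [_ [_ [_ [g1' _]]]]]. rewrite g1'. reflexivity.
      - destruct IHq as [x1 E1]. exists (ia_int x1).
        destruct HGs as [_ [_ [_ [_ [_ gg]]]]]. rewrite gg, E1. reflexivity. }
    destruct (Hproj (Bstar A1) (Bstar A2)) with (f := Gs) (h := Hs) as [K [HK EK]];
      auto using Bstar_Vstar.
    set (u := fun x => proj1_sig (K x)).
    assert (Hu : is_hom_IA u) by (unfold u; apply (IA_comp K (fun y : Bstar A1 => proj1_sig y)); auto using proj1_hom).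
    destruct (bsO HB HA1 u Hu) as [kap [Hkap Ekap]].
    exists (fun a => j1 (kap a)). split.
    { apply HA_comp; auto. }
    intro a. apply inj2. change (f' (kap a) = h' a).
    apply open_eq.
    assert (Hkopen : ia_int (proj1_sig (K (bs a))) = proj1_sig (K (bs a))).
    { pose proof (proj2_sig (kap a)) as P. simpl in P. rewrite Ekap in P. exact P. }
    transitivity (Fs1 (K (bs a))).
    + rewrite (EFs1 (K (bs a)) Hkopen). f_equal. f_equal. apply open_eq. rewrite Ekap. reflexivity.
    + rewrite <- EGs, EK, EHs.
      rewrite (EHs1 (bs a) (proj2_sig a)). simpl.
      replace (exist _ (proj1_sig a) (proj2_sig a)) with a by (destruct a; reflexivity).
      reflexivity.
Qed.
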